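(* Let $n\ge 3$, let $u\in\mathbb{Z}_n^\times$, and let $k$ be an integer with $k\not\equiv 0,1\pmod n$. Consider the set $\mathcal{B}=\binom{\mathbb{Z}_n}{3}-f_{u,ku}$. (1) If $n$ is odd, $\mathcal{B}$ is the set of bases of a matroid on $\mathbb{Z}_n$ if and only if $k\not\equiv -1,\,2,\,\tfrac{n+1}{2}\pmod n$. (2) If $n$ is even, $\mathcal{B}$ is the set of bases of a matroid on $\mathbb{Z}_n$ if and only if $k\not\equiv -1,\,2,\,\tfrac{n}{2},\,\tfrac{n}{2}+1\pmod n$. (Such a matroid is invariant under translation, i.e. corresponds to a three-dimensional tropical subrepresentation of $\mathbb{B}[\mathbb{Z}_n]$.)
   Context: $\mathbb{Z}_n$ acts on $\binom{\mathbb{Z}_n}{3}$ (3-element subsets of $\mathbb{Z}_n$) by $x\cdot\{a,b,c\}=\{x+a,x+b,x+c\}$. For $i,j\in\mathbb{Z}_n$ with $0,i,j$ pairwise distinct, $f_{i,j}=\{\{a,a+i,a+j\}\mid a\in\mathbb{Z}_n\}$, an orbit of this action. $\mathbb{Z}_n^\times$ denotes the units of $\mathbb{Z}_n$. *)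

(* Defs.v *)
From HB Require Import structures.
From mathcomp Require Import all_boot all_order all_algebra.
Set Implicit Arguments. Unset Strict Implicit. Unset Printing Implicit Defensive.
Import GRing.Theory.
Local Open Scope ring_scope.

(* Z_n is 'Z_n (used only with 2 < n, so 'Z_n is exactly Z/nZ). *)

Definition orbit3 (n : nat) (i j : 'Z_n) : {set {set 'Z_n}} :=
  [set [set a; a + i; a + j] | a : 'Z_n].

Definition three_subsets (n : nat) : {set {set 'Z_n}} :=
  [set S : {set 'Z_n} | #|S| == 3%N].

Definition is_matroid_bases (T : finType) (BB : {set {set T}}) : Prop :=
  BB != set0 /\
  forall A B, A \in BB -> B \in BB ->
    forall a, a \in A :\: B ->
      exists2 b, b \in B :\: A & (b |: (A :\ a)) \in BB.

(* Main.v *)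
Require Import Defs.
From HB Require Import structures.
From mathcomp Require Import all_boot all_order all_algebra zify ring.
Import GRing.Theory.
Local Open Scope ring_scope.
Set Implicit Arguments. Unset Strict Implicit.

Lemma mod2 (N c : nat) : (c %% N = if c < N then c else if c < N + N then c - N else c %% N)%N.
Proof.
case: ifP => h1; first by rewrite modn_small.
case: ifP => h2 //.
have -> : c = ((c - N) + N)%N by lia.
by rewrite modnDr modn_small; lia.
Qed.

Section Z.
Variable N : nat.
Hypothesis hN : (2 < N)%N.
Local Notation Z := 'Z_N.

Lemma eqZ (a b : nat) : ((a%:R : Z) == b%:R) = (a %% N == b %% N)%N.
Proof. by rewrite -val_eqE /= !val_Zp_nat // ltnW. Qed.



Lemma valZ_lt (x : Z) : (val x < N)%N.
Proof. case: x => m /= hm. rewrite /Zp_trunc in hm. have: (N.-2.+2 = N)%N by lia. move=> e. by rewrite -e. Qed.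

Lemma natZ (x : Z) : x = (val x)%:R.
Proof. by apply: val_inj; rewrite /= val_Zp_nat ?modn_small ?valZ_lt // ltnW. Qed.

End Z.

Ltac mods := repeat match goal with |- context [(?c %% ?M)%N] =>
  rewrite [(c %% M)%N]mod2; case: ifP => ?; [ | case: ifP => ?; [ | exfalso; lia ] ] end.

Lemma in3 (T : finType) (x a b c : T) : x \in [set a; b; c] -> [\/ x = a, x = b | x = c].
Proof. by rewrite !inE => /orP[/orP[]|]/eqP ->; [apply: Or31|apply: Or32|apply: Or33]. Qed.

Lemma card3 (T : finType) (x y z : T) : x != y -> x != z -> y != z -> #|[set x; y; z]| = 3%N.
Proof.
move=> xy xz yz.
have -> : [set x; y; z] = x |: [set y; z] by apply/setP=> w; rewrite !inE orbA.
by rewrite cardsU1 cards2 !inE yz negb_or xy xz.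
Qed.

Lemma modsub (N c : nat) : (N <= c < N + N)%N -> (c %% N = c - N)%N.
Proof. by move=> h; rewrite mod2 ifF ?ifT; lia. Qed.

Ltac mods2 := repeat match goal with |- context [(?c %% ?M)%N] =>
  let H := fresh "hc" in
  first [ assert (H : (c < M)%N) by lia; rewrite [(c %% M)%N](modn_small H); clear H
        | assert (H : (M <= c < M + M)%N) by lia; rewrite [(c %% M)%N](modsub H); clear H
        | rewrite [(c %% M)%N]mod2; case: ifP => ?; [ | case: ifP => ?; [ | exfalso; lia ] ] ] end.


Section M.
Variable N : nat.
Hypothesis hN : (2 < N)%N.
Local Notation Z := 'Z_N.
Variable u : Z.
Hypothesis hu : u \is a GRing.unit.

Lemma two0 : (2 : Z) != 0.
Proof. by rewrite -[0]/(0%:R) eqZ // mod0n; mods; lia. Qed.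

Lemma one0 : (1 : Z) != 0.
Proof. by rewrite -[0]/(0%:R) -[1]/(1%:R) eqZ // mod0n; mods; lia. Qed.

Lemma eqcu (c d : Z) : (c * u == d * u) = (c == d).
Proof. exact: (inj_eq (mulIr hu)). Qed.

Definition S3 K a : {set Z} := [set a; a + u; a + K * u].

Lemma memO K a p : p \in S3 K a -> exists2 s, s \in [set 0; 1; K] & p = a + s * u.
Proof.
case/in3=> ->; [exists 0 | exists 1 | exists K]; rewrite ?inE ?eqxx ?orbT //; ring.
Qed.

Definition conds (K : Z) := [/\ K != 0, K - 1 != 0, K + 1 != 0 & K - 2 != 0] /\
   [/\ K + K != 0, K + K - 1 != 0 & K + K - 2 != 0].

Ltac killc H c := match type of H with ?L = 0 =>
  apply: (negP c); apply/eqP;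
  first [ transitivity L; [ring | exact H] | transitivity (- L); [ring | by rewrite H oppr0] ] end.

Lemma diff_inj K (C : conds K) s s' t t' :
  s \in [set 0; 1; K] -> s' \in [set 0; 1; K] -> t \in [set 0; 1; K] -> t' \in [set 0; 1; K] ->
  s != s' -> t != t' -> s - s' = t - t' -> s = t.
Proof.
case: C => [[c1 c2 c3 c4] [c5 c6 c7]]; have c8 := two0; have c9 := one0.
move=> /in3[]-> /in3[]-> /in3[]-> /in3[]-> h1 h2 H; try reflexivity;
  try (by rewrite eqxx in h1); try (by rewrite eqxx in h2);
  move/eqP: H; rewrite -subr_eq0 => /eqP H; exfalso;
  first [ killc H c1 | killc H c2 | killc H c3 | killc H c4 | killc H c5 | killc H c6
        | killc H c7 | killc H c8 | killc H c9
        | (apply: (negP h1); apply/eqP; rewrite -subr_eq0; apply/eqP;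
           match type of H with ?L = 0 => transitivity L; [ring | exact H] end) ].
Qed.
Lemma sparse K (C : conds K) a b p q : p != q -> p \in S3 K a -> q \in S3 K a ->
  p \in S3 K b -> q \in S3 K b -> a = b.
Proof.
move=> pq /memO[s hs Ep] /memO[s' hs' Eq] /memO[t ht Ep'] /memO[t' ht' Eq'].
have H : (s - s') * u = (t - t') * u.
  transitivity (p - q); first by rewrite Ep Eq; ring.
  by rewrite Ep' Eq'; ring.
have H' := mulIr hu H.
have ss : s != s' by apply: contraNneq pq => e; rewrite Ep Eq e.
have tt : t != t' by apply: contraNneq pq => e; rewrite Ep' Eq' e.
have st := diff_inj C hs hs' ht ht' ss tt H'.
by apply: (addIr (s * u)); rewrite -Ep st -Ep'.
Qed.

Lemma memF K X : X \in orbit3 u (K * u) -> exists a, X = S3 K a.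
Proof. by case/imsetP=> a _ ->; exists a. Qed.

Lemma S3F K a : S3 K a \in orbit3 u (K * u).
Proof. by apply/imsetP; exists a. Qed.

Lemma good K (C : conds K) : is_matroid_bases (three_subsets N :\: orbit3 u (K * u)).
Proof.
have [[c1 c2 c3 c4] [c5 c6 c7]] := C.
have c8 := two0; have c9 := one0.
have u0 : u != 0 by apply: contraTneq hu => ->; rewrite unitr0.
split.
  apply/set0Pn; exists [set 0; u; 2 * u].
  have e0 : (0 : Z) = 0 * u by rewrite mul0r.
  have e1 : u = 1 * u by rewrite mul1r.
  rewrite !inE card3; first last.
  - by rewrite {1}e1 eqcu eq_sym -subr_eq0; apply: contra c9 => /eqP e; apply/eqP; rewrite -e; ring.
  - by rewrite e0 eqcu eq_sym.
  - by rewrite eq_sym.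
  rewrite eqxx andbT; apply/negP => /memF[a Ea].
  have a0 : a = 0.
    apply: (@sparse K C a 0 0 u) => //; first by rewrite eq_sym.
    - by rewrite -Ea !inE eqxx.
    - by rewrite -Ea !inE eqxx ?orbT.
    - by rewrite !inE ?add0r eqxx ?orbT.
    - by rewrite !inE ?add0r eqxx ?orbT.
  have : 2 * u \in S3 K 0 by rewrite -a0 -Ea !inE eqxx !orbT.
  have f0 : (2 * u == 0) = (2 == 0 :> Z) by rewrite -(eqcu 2 0) mul0r.
  have f1 : (2 * u == u) = (2 == 1 :> Z) by rewrite -(eqcu 2 1) mul1r.
  rewrite !inE !add0r f0 f1 eqcu => /orP[/orP[]|] /eqP e.
  - by move: c8; rewrite e eqxx.
  - by apply: (negP c9); apply/eqP; transitivity (2 - 1 : Z); [ring | by rewrite e subrr].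
  - by move: c4; rewrite -e subrr eqxx.
move=> A B; rewrite !inE => /andP[nFA tA] /andP[nFB tB] a.
rewrite inE => /andP[naB aA].
set D := B :\: A; set C' := A :\ a.
have cC : #|C'| = 2%N by move: tA; rewrite (cardsD1 a) aA => /eqP [].
have sCA : C' \subset A by apply: subD1set.
have card_bC : forall b, b \notin A -> #|b |: C'| = 3%N.
  move=> b bA; rewrite cardsU1 cC; suff -> : b \notin C' by [].
  by apply: contra bA; apply: (subsetP sCA).
case E: [exists b in D, (b |: C') \notin orbit3 u (K * u)].
  case/existsP: E => b /andP[bD nF]; exists b => //.
  move: bD; rewrite inE => /andP[bA _].
  by rewrite !inE nF card_bC.
exfalso.
have allF : forall b, b \in D -> b |: C' \in orbit3 u (K * u).
  move=> b hb; apply: contraFT E => h; apply/existsP; exists b; by rewrite hb h.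
have uniqb : forall b1 b2, b1 \in D -> b2 \in D -> b1 = b2.
  move=> b1 b2 h1 h2.
  have b1A : b1 \notin A by move: (h1); rewrite /D inE => /andP[].
  case/cards2P: (introT eqP cC) => p [q [pq EC]].
  have [a1 E1] := memF (allF _ h1).
  have [a2 E2] := memF (allF _ h2).
  have pC : p \in C' by rewrite EC !inE eqxx.
  have qC : q \in C' by rewrite EC !inE eqxx orbT.
  have := @sparse K C a1 a2 p q pq.
  rewrite -E1 -E2 !in_setU1 pC qC !orbT => /(_ isT isT isT isT) e12.
  have : b1 \in b2 |: C' by rewrite E2 -e12 -E1 setU11.
  rewrite in_setU1 => /orP[/eqP //|b1C].
  by move: b1A; rewrite (subsetP sCA _ b1C).
case: (set_0Vmem D) => [D0 | [b hb]].
  have : B \subset C'.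
    apply/subsetP=> y yB; rewrite !inE.
    have yA : y \in A.
      apply: contraTT isT => yA.
      have : y \in D by rewrite inE yA yB.
      by rewrite D0 inE.
    by rewrite yA andbT; apply: contraNN naB => /eqP <-.
  move/subset_leq_card; rewrite cC; move/eqP: tB => ->; done.
have BbC : B = b |: C'.
  apply/eqP; rewrite eqEcard; apply/andP; split.
    apply/subsetP => y yB; rewrite !inE.
    case yA: (y \in A).
      by rewrite andbT; apply/orP; right; apply: contraNN naB => /eqP <-.
    have yD : y \in D by rewrite inE yA yB.
    by rewrite (uniqb _ _ yD hb) eqxx.
  move: hb; rewrite inE => /andP[bA _].
  by rewrite card_bC //; move/eqP: tB => ->.
by move: nFB; rewrite BbC (allF _ hb).
Qed.

Definition e (c : nat) : Z := c%:R * u.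

Lemma eqe c d : (e c == e d) = (c %% N == d %% N)%N.
Proof. by rewrite /e eqcu eqZ. Qed.

Lemma adde1 c : e c + u = e c.+1.
Proof. by rewrite /e -[c.+1]addn1 natrD mulrDl mul1r. Qed.

Lemma addee c d : e c + d%:R * u = e (c + d).
Proof. by rewrite /e natrD mulrDl. Qed.

Definition inm (t x y z : nat) := [|| t %% N == x %% N, t %% N == y %% N | t %% N == z %% N]%N.

Lemma mem_e t x y z : (e t \in [set e x; e y; e z]) = inm t x y z.
Proof. by rewrite !inE !eqe /inm orbA. Qed.

Definition seteq (x1 x2 x3 y1 y2 y3 : nat) :=
  [&& inm x1 y1 y2 y3, inm x2 y1 y2 y3 & inm x3 y1 y2 y3] &&
  [&& inm y1 x1 x2 x3, inm y2 x1 x2 x3 & inm y3 x1 x2 x3].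

Lemma seteqP x1 x2 x3 y1 y2 y3 : seteq x1 x2 x3 y1 y2 y3 ->
  [set e x1; e x2; e x3] = [set e y1; e y2; e y3].
Proof.
case/andP=> /and3P[h1 h2 h3] /and3P[h4 h5 h6].
apply/eqP; rewrite eqEsubset; apply/andP; split; apply/subsetP=> w /in3[]->;
  by rewrite mem_e.
Qed.

Definition crit k (x y z : nat) :=
  [|| inm x.+1 x y z && inm (x + k) x y z, inm y.+1 x y z && inm (y + k) x y z
    | inm z.+1 x y z && inm (z + k) x y z].

Lemma notF K k (EK : K = k%:R) x y z : ~~ crit k x y z ->
  [set e x; e y; e z] \notin orbit3 u (K * u).
Proof.
move=> hc; apply/negP => /memF[a Ea].
have ha : a \in S3 K a by rewrite !inE eqxx.
have ha1 : a + u \in S3 K a by rewrite !inE eqxx orbT.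
have haK : a + K * u \in S3 K a by rewrite !inE eqxx !orbT.
rewrite -Ea in ha ha1 haK; move: ha1 haK; rewrite EK.
case/in3: ha => ->; rewrite adde1 addee !mem_e => h1 h2; move: hc; rewrite /crit h1 h2 ?orbT //.
Qed.

Lemma inF K k (EK : K = k%:R) x y z c : seteq x y z c c.+1 (c + k) ->
  [set e x; e y; e z] \in orbit3 u (K * u).
Proof.
move/seteqP => ->; rewrite -adde1 -(addee c k) -EK; exact: S3F.
Qed.

Lemma set3C1 (T : finType) (b p q : T) : b |: [set p; q] = [set b; p; q].
Proof. by apply/setP=> w; rewrite !inE ?orbA. Qed.

Lemma setD3 (T : finType) (a p q : T) : a != p -> a != q -> [set a; p; q] :\ a = [set p; q].
Proof.
move=> ap aq; apply/setP=> w; rewrite !inE.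
case: (eqVneq w a) => [->|_] /=; last by rewrite ?orbA.
by rewrite (negbTE ap) (negbTE aq).
Qed.

Lemma witness K k (EK : K = k%:R) (a p q x y : nat) :
  [&& a %% N != p %% N, a %% N != q %% N & p %% N != q %% N]%N ->
  [&& p %% N != x %% N, p %% N != y %% N & x %% N != y %% N]%N ->
  [&& a %% N != x %% N & a %% N != y %% N]%N ->
  ~~ crit k a p q -> ~~ crit k p x y ->
  (exists c, seteq x p q c c.+1 (c + k)) -> (exists c, seteq y p q c c.+1 (c + k)) ->
  ~ is_matroid_bases (three_subsets N :\: orbit3 u (K * u)).
Proof.
move=> /and3P[ap aq pq] /and3P[px py xy] /andP[ax ay] nA nB [c1 F1] [c2 F2] [_ H].
have tA : [set e a; e p; e q] \in three_subsets N :\: orbit3 u (K * u).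
  by rewrite !inE (notF EK nA) card3 // eqe.
have tB : [set e p; e x; e y] \in three_subsets N :\: orbit3 u (K * u).
  by rewrite !inE (notF EK nB) card3 // eqe.
have aAB : e a \in [set e a; e p; e q] :\: [set e p; e x; e y].
  by rewrite in_setD !mem_e /inm (negbTE ap) (negbTE ax) (negbTE ay) eqxx.
have [b hb hin] := H _ _ tA tB _ aAB.
move: hin; rewrite setD3 ?eqe // set3C1.
move: hb; rewrite in_setD => /andP[bA /in3[]] E; rewrite E in bA *.
- by rewrite mem_e /inm eqxx !orbT in bA.
- by rewrite in_setD (inF EK F1).
- by rewrite in_setD (inF EK F2).
Qed.

Ltac natsolve := rewrite /crit /seteq /inm; mods2; lia.

Lemma bad2big : (4 < N)%N -> ~ is_matroid_bases (three_subsets N :\: orbit3 u (2 * u)).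
Proof.
move=> h4 HM.
eapply (@witness 2 2 erefl 4 1 2 0 3); last exact HM; try natsolve.
- by exists 0%N; natsolve.
- by exists 1%N; natsolve.
Qed.

Lemma badh h : N = (h + h)%N -> (3 <= h)%N ->
  ~ is_matroid_bases (three_subsets N :\: orbit3 u (h%:R * u)).
Proof.
move=> Nh h3 HM.
eapply (@witness _ h erefl (h + h - 1) 0 h 1 h.+1); last exact HM; try natsolve.
- by exists 0%N; natsolve.
- by exists h; natsolve.
Qed.

Lemma badh1 h : N = (h + h)%N -> (3 <= h)%N ->
  ~ is_matroid_bases (three_subsets N :\: orbit3 u ((h + 1)%:R * u)).
Proof.
move=> Nh h3 HM.
eapply (@witness _ (h + 1) erefl 2 1 h.+1 0 h); last exact HM; try natsolve.
- by exists 0%N; natsolve.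
- by exists h; natsolve.
Qed.

Lemma allF_notmat (F : {set {set Z}}) :
  (forall S : {set Z}, #|S| = 3%N -> S \in F) -> ~ is_matroid_bases (three_subsets N :\: F).
Proof.
move=> h [ne _]; case/set0Pn: ne => S; rewrite !inE => /andP[nF /eqP c3].
by rewrite h in nF.
Qed.

Lemma cardZ : #|Z| = N.
Proof. rewrite card_ord /Zp_trunc; lia. Qed.

Lemma e0 : e 0 = 0.
Proof. by rewrite /e mul0r. Qed.

Lemma e1 : e 1 = u.
Proof. by rewrite /e mul1r. Qed.

Lemma bad2 : ~ is_matroid_bases (three_subsets N :\: orbit3 u (2 * u)).
Proof.
have [h4|] := ltnP 4 N; first exact: bad2big.
rewrite leq_eqVlt => /orP[/eqP N4|]; last first.
  rewrite ltnS leq_eqVlt ltnS leqNgt hN orbF => /eqP N3.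
  apply: allF_notmat => S cS.
  have -> : S = [set e 0; e 1; e 2].
    have ST : S = setT by apply/eqP; rewrite eqEcard subsetT /= cS cardsT cardZ N3.
    have TT : [set e 0; e 1; e 2] = setT.
      apply/eqP; rewrite eqEcard subsetT /= cardsT cardZ card3 ?eqe ?N3 //.
    by rewrite ST TT.
  rewrite -[e 1]adde1 -(addee 0 2) e0.
  exact: (S3F 2 0).
apply: allF_notmat => S cS.
have [c cS'] : exists c, c \notin S.
  apply/existsP; apply: contraTT isT; rewrite negb_exists => /forallP h.
  have : S = setT by apply/setP=> w; rewrite inE; move: (h w); rewrite negbK.
  by move=> ST; move: cS; rewrite ST cardsT cardZ N4.
have E1 : S = [set~ c].
  apply/eqP; rewrite eqEcard cardsC1 cardZ cS; apply/andP; split; last by lia.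
  by apply/subsetP=> w wS; rewrite !inE; apply: contraNneq cS' => <-.
have E2 : S3 2 (c + u) = [set c + e 1; c + e 2; c + e 3].
  by rewrite /S3 /e; congr [set _; _; _]; ring.
have ne : forall j, (0 < j < 4)%N -> c + e j != c.
  move=> j hj; rewrite -{2}[c]addr0 (inj_eq (addrI c)) -e0 eqe N4; lia.
have E3 : S3 2 (c + u) = [set~ c].
  apply/eqP; rewrite eqEcard cardsC1 cardZ E2 card3; last first.
  - by rewrite (inj_eq (addrI c)) eqe N4.
  - by rewrite (inj_eq (addrI c)) eqe N4.
  - by rewrite (inj_eq (addrI c)) eqe N4.
  apply/andP; split; last by lia.
  apply/subsetP => w /in3[]->; rewrite !inE; apply: ne => //.
by rewrite E1 -E3 S3F.
Qed.

End M.


Lemma orb_m1 N (u : 'Z_N) : orbit3 u (-1 * u) = orbit3 u (2 * u).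
Proof.
apply/setP=> X; apply/imsetP/imsetP => [[a _ ->]|[a _ ->]].
  exists (a - u) => //; apply/setP => w; rewrite !inE.
  have -> : a - u + u = a by ring.
  have -> : a - u + 2 * u = a + u by ring.
  have -> : a + -1 * u = a - u by ring.
  by case: (w == a); case: (w == a - u); case: (w == a + u); rewrite ?orbT ?orbF.
exists (a + u) => //; apply/setP => w; rewrite !inE.
have -> : a + u + -1 * u = a by ring.
have -> : a + 2 * u = a + u + u by ring.
by case: (w == a); case: (w == a + u); case: (w == a + u + u); rewrite ?orbT ?orbF.
Qed.

Lemma orb_half N (u K : 'Z_N) : K + K = 1 -> orbit3 u (K * u) = orbit3 (K * u) (2 * (K * u)).
Proof.
move=> HK; have e2 : 2 * (K * u) = u by transitivity ((K + K) * u); [ring | rewrite HK mul1r].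
rewrite e2; apply: eq_imset => a; apply/setP => w; rewrite !inE.
by case: (w == a); case: (w == a + u); case: (w == a + K * u); rewrite ?orbT ?orbF.
Qed.

Section Key.
Variable N : nat.
Hypothesis hN : (2 < N)%N.
Local Notation Z := 'Z_N.

Lemma toNat (a b : nat) : (a%:R : Z) = b%:R -> (a %% N = b %% N)%N.
Proof. by move/eqP; rewrite eqZ // => /eqP. Qed.

Lemma key (u : Z) (hu : u \is a GRing.unit) K (K0 : K != 0) (K1 : K != 1) :
  is_matroid_bases (three_subsets N :\: orbit3 u (K * u)) <-> conds K.
Proof.
split; last exact: good.
move=> HM.
have Kx := natZ hN K; have xN := valZ_lt hN K; set x := val K in Kx xN.
have x0 : x != 0%N by apply: contra K0 => /eqP x0; rewrite Kx x0.
have x1 : x != 1%N by apply: contra K1 => /eqP x1; rewrite Kx x1.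
have nm1 : K + 1 != 0.
  apply/negP => /eqP H; have Km1 : K = -1 by apply/eqP; rewrite -addr_eq0 H.
  by move: HM; rewrite Km1 orb_m1; apply: bad2.
have n2 : K - 2 != 0.
  apply/negP; rewrite subr_eq0 => /eqP K2.
  by move: HM; rewrite K2; apply: bad2.
split; split => //; first by rewrite subr_eq0.
- apply/negP => /eqP H.
  have : (x + x = N)%N.
    move: H; rewrite Kx -natrD -[0]/(0%:R) => /toNat; mods; lia.
  move=> Nx.
  have [x3|] := leqP 3 x.
    by move: HM; rewrite Kx; apply: (badh hN hu (esym Nx) x3).
  move=> x3; have x2 : x = 2%N by lia.
  by move: n2; rewrite Kx x2 subrr eqxx.
- rewrite subr_eq0; apply/negP => /eqP H.
  have KU : (K * u) \is a GRing.unit.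
    by rewrite unitrM hu andbT; apply/unitrPr; exists 2; transitivity (K + K); [ring | exact H].
  by move: HM; rewrite (orb_half u H); apply: bad2.
- rewrite subr_eq0; apply/negP => /eqP H.
  have : (x + x = N + 2)%N.
    move: H; rewrite Kx -natrD => /toNat; mods; lia.
  move=> Nx.
  have [x4|] := leqP 4 x.
    move: HM; rewrite Kx.
    have -> : x = ((x - 1) + 1)%N by lia.
    by apply: (badh1 hN hu (_ : N = (x - 1) + (x - 1))%N); lia.
  move=> x4; have x3 : x = 3%N by lia.
  move: nm1; rewrite Kx x3 -[1]/(1%:R) -natrD -[0]/(0%:R) eqZ //; mods; lia.
Qed.
End Key.

Section Fin.
Variable N : nat.
Hypothesis hN : (2 < N)%N.
Local Notation Z := 'Z_N.
Lemma eq0Z a : ((a%:R : Z) == 0) = (a %% N == 0 %% N)%N.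
Proof. by rewrite -eqZ. Qed.
Lemma eq1Z a : ((a%:R : Z) == 1) = (a %% N == 1 %% N)%N.
Proof. by rewrite -eqZ. Qed.
Lemma eqm1Z a : ((a%:R : Z) == -1) = (a.+1 %% N == 0 %% N)%N.
Proof. by rewrite -addr_eq0 natr1 eq0Z. Qed.
End Fin.

Theorem mainTheorem15 (n : nat) (hn : (2 < n)%N) (u : 'Z_n) (k : int)
  (hu : u \is a GRing.unit)
  (hk0 : (k%:~R : 'Z_n) != 0) (hk1 : (k%:~R : 'Z_n) != 1) :
  let kn : 'Z_n := k%:~R in
  let BB := three_subsets n :\: orbit3 u (kn * u) in
  (odd n ->
    (is_matroid_bases BB <->
      [/\ kn != -1, kn != 2 & kn != ((n + 1)./2)%:R])) /\
  (~~ odd n ->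
    (is_matroid_bases BB <->
      [/\ kn != -1, kn != 2, kn != (n./2)%:R & kn != (n./2 + 1)%:R])).
Proof.
move=> kn BB.
have hK := key hn hu hk0 hk1.
rewrite /BB; split => hodd; rewrite hK /conds; move: hk0 hk1; rewrite -/kn;
  rewrite !subr_eq0 (natZ hn kn); have xN := valZ_lt hn kn; set x := val kn in xN *;
  rewrite !natr1 -!natrD !(eqm1Z hn) !(eq0Z hn) !(eq1Z hn) !(eqZ hn);
  move: hodd xN => hodd xN; mods2; move=> ? ?;
  (split => [[[? ? ? ?] [? ? ?]]|]; [ split; lia
          | first [case=> ? ? ? ?; split; split; lia | case=> ? ? ?; split; split; lia] ]).
Qed.
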